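(* Let $m\ge 1$. The chip-firing process on the self-loop graph, beginning with $4m-1$ chips at site $0$, terminates with exactly $1$ chip at each of the positions $-m$, $0$ and $m$; exactly $2$ chips at each of the positions $-m+1,\dots,-1$ and $1,\dots,m-1$; and $0$ chips elsewhere.
   Context: The self-loop graph is the path graph on $\mathbb{Z}$ (each $i$ adjacent to $i\pm1$) with one self-loop at every vertex. A site can fire if it holds at least $3$ chips; firing sends one chip to each of the two neighboring sites and keeps one (the chip along the self-loop) at the site. The process terminates when every site has at most $2$ chips. *)

(* Defs.v *)
From Stdlib Require Import ZArith Relations.
Open Scope Z_scope.

Definition config := Z -> nat.

(* Firing site i: i loses 3 chips, sends one to each neighbour i-1, i+1, and
   keeps one (the chip along the self-loop): net change -2 at i. *)
Definition fire (c : config) (i : Z) : config :=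
  fun j => if Z.eq_dec j i then (c j - 2)%nat
           else if Z.eq_dec j (i - 1) then S (c j)
           else if Z.eq_dec j (i + 1) then S (c j)
           else c j.

Definition step (c c' : config) : Prop :=
  exists i : Z, (3 <= c i)%nat /\ forall j, c' j = fire c i j.

Definition stable (c : config) : Prop := forall j : Z, (c j <= 2)%nat.

Definition reachable : config -> config -> Prop := clos_refl_trans config step.

Definition init (N : nat) : config := fun j => if Z.eq_dec j 0 then N else 0%nat.

Definition final_config (m : Z) : config :=
  fun j => if Z.eq_dec j (-m) then 1%nat
           else if Z.eq_dec j 0 then 1%nat
           else if Z.eq_dec j m then 1%nat
           else if Z_lt_le_dec (-m) j then
                  (if Z_lt_le_dec j m then 2%nat else 0%nat)
           else 0%nat.

(* Main.v *)
Require Import Defs.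
From Stdlib Require Import ZArith Relations Lia Classical FunctionalExtensionality.
Open Scope Z_scope.

Definition vv (m j : Z) : Z :=
  if Z_le_dec j (-m) then 0 else if Z_le_dec j 0 then (m+j)*(m+j)
  else if Z_le_dec m j then 0 else (m-j)*(m-j).

Definition Lap (u : Z -> Z) (j : Z) : Z := u (j-1) + u (j+1) - 2 * u j.

Definition c0z (m j : Z) : Z := if Z.eq_dec j 0 then 4*m-1 else 0.

Lemma init_z m j : 1 <= m -> Z.of_nat (init (Z.to_nat (4*m-1)) j) = c0z m j.
Proof. intros. unfold init, c0z. destruct Z.eq_dec; [rewrite Z2Nat.id by lia|]; reflexivity. Qed.

Lemma final_eq m j : 1 <= m -> Z.of_nat (final_config m j) = c0z m j + Lap (vv m) j.
Proof.
  intros Hm. unfold final_config, c0z, Lap, vv.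
  repeat (destruct Z.eq_dec); repeat (destruct Z_le_dec); repeat (destruct Z_lt_le_dec);
  subst; cbn [Z.of_nat Pos.of_succ_nat]; try nia.
Qed.

Lemma final_stable m : 1 <= m -> stable (final_config m).
Proof.
  intros Hm j. unfold final_config.
  repeat (destruct Z.eq_dec); repeat (destruct Z_lt_le_dec); lia.
Qed.

Lemma final_2 m k : 1 <= m -> -m < k < m -> k <> 0 -> final_config m k = 2%nat.
Proof.
  intros Hm H1 H2. unfold final_config.
  repeat (destruct Z.eq_dec); repeat (destruct Z_lt_le_dec); lia.
Qed.

Lemma final_0 m : 1 <= m -> final_config m 0 = 1%nat.
Proof.
  intros Hm. unfold final_config.
  repeat (destruct Z.eq_dec); repeat (destruct Z_lt_le_dec); lia.
Qed.

Lemma vv_nonneg m j : 0 <= vv m j.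
Proof. unfold vv. repeat destruct Z_le_dec; nia. Qed.

Lemma vv_out m k : 1 <= m -> k <= -m \/ m <= k -> vv m k = 0.
Proof. intros. unfold vv. repeat destruct Z_le_dec; nia. Qed.

Definition Inv (m : Z) (c : config) (u : Z -> Z) : Prop :=
  (forall j, 0 <= u j <= vv m j) /\
  (forall j, Z.of_nat (c j) = c0z m j + Lap u j).

Definition upd (u : Z -> Z) (i : Z) : Z -> Z :=
  fun k => if Z.eq_dec k i then u k + 1 else u k.

Fixpoint sumZ (f : nat -> Z) (n : nat) : Z :=
  match n with O => 0 | S n => sumZ f n + f n end.

Lemma sumZ_ext f g n : (forall k, (k < n)%nat -> f k = g k) -> sumZ f n = sumZ g n.
Proof. induction n; intros H; simpl; auto. rewrite IHn, H; auto. Qed.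

Lemma sumZ_upd f g n k0 : (k0 < n)%nat -> (forall k, k <> k0 -> f k = g k) ->
  g k0 = f k0 - 1 -> sumZ g n = sumZ f n - 1.
Proof.
  intros Hk Hfg Hk0. induction n as [|n IH]; simpl. lia.
  destruct (Nat.eq_dec n k0).
  - subst. assert (sumZ g k0 = sumZ f k0).
    { apply sumZ_ext. intros k Hk'. symmetry. apply Hfg. lia. }
    lia.
  - rewrite IH by lia. rewrite (Hfg n) by auto. lia.
Qed.

Lemma sumZ_nonneg f n : (forall k, 0 <= f k) -> 0 <= sumZ f n.
Proof. intros H. induction n; simpl; [lia| specialize (H n); lia]. Qed.

Definition Phi (m : Z) (u : Z -> Z) : Z :=
  sumZ (fun k => vv m (Z.of_nat k - m) - u (Z.of_nat k - m)) (Z.to_nat (2*m+1)).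


Lemma step_inv2 m c c' u : 1 <= m -> Inv m c u -> step c c' ->
  exists u', Inv m c' u' /\ Phi m u' = Phi m u - 1 /\ 0 <= Phi m u'.
Proof.
  intros Hm [Hb Hf] [i [Hi Hc]].
  assert (Hlt : u i < vv m i).
  { destruct (Hb i) as [_ Hle]. destruct (Z.eq_dec (u i) (vv m i)) as [E|]; [|lia].
    exfalso. pose proof (Hf i) as Fi. pose proof (final_eq m i Hm) as Ei.
    pose proof (final_stable m Hm i) as Si. unfold Lap in *.
    pose proof (Hb (i-1)). pose proof (Hb (i+1)). lia. }
  assert (Hrange : -m < i < m).
  { destruct (Z_lt_le_dec (-m) i); destruct (Z_lt_le_dec i m); try lia;
    rewrite vv_out in Hlt by lia; pose proof (Hb i); lia. }
  exists (upd u i). split; [split|split].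
  - intro k. unfold upd. pose proof (Hb k). pose proof (Hb i). destruct Z.eq_dec; subst; lia.
  - intro j. rewrite Hc. pose proof (Hf j) as Fj. unfold fire, Lap, upd in *.
    repeat destruct Z.eq_dec; subst; try lia; replace (i+1-1) with i in * by ring; replace (i-1+1) with i in * by ring; try lia.
  - unfold Phi. apply sumZ_upd with (k0 := Z.to_nat (i + m)).
    + lia.
    + intros k Hk. unfold upd. destruct Z.eq_dec; lia.
    + unfold upd. rewrite Z2Nat.id by lia. replace (i + m - m) with i by ring.
      destruct Z.eq_dec; lia.
  - unfold Phi. apply sumZ_nonneg. intro k. unfold upd. pose proof (Hb (Z.of_nat k - m)). destruct Z.eq_dec as [e|]; [rewrite e in *|]; lia.
Qed.

Lemma acc_lemma m : 1 <= m -> forall n c u, Inv m c u -> (Z.to_nat (Phi m u) < n)%nat ->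
  Acc (fun y x => step x y) c.
Proof.
  intros Hm n. induction n as [|n IH]; intros c u HI Hn. lia.
  constructor. intros c' Hs. destruct (step_inv2 m c c' u Hm HI Hs) as [u' [HI' [HP HP']]].
  apply (IH c' u' HI'). lia.
Qed.

Lemma reach_inv m c : 1 <= m -> reachable (init (Z.to_nat (4*m-1))) c -> exists u, Inv m c u.
Proof.
  intros Hm H. apply clos_rt_rtn1 in H. induction H as [|y z Hs _ [u HI]].
  - exists (fun _ => 0). split.
    + intro j. pose proof (vv_nonneg m j). lia.
    + intro j. rewrite init_z by lia. unfold Lap. lia.
  - destruct (step_inv2 m y z u Hm HI Hs) as [u' [HI' _]]. eauto.
Qed.

Lemma up_ind (P : Z -> Prop) a b : P a -> (forall k, a < k <= b -> P (k-1) -> P k) ->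
  forall k, a <= k <= b -> P k.
Proof.
  intros H0 HS k Hk.
  assert (forall n : nat, a + Z.of_nat n <= b -> P (a + Z.of_nat n)).
  { induction n as [|n IH]; intros.
    - replace (a + Z.of_nat 0) with a by lia. auto.
    - apply HS. lia. replace (a + Z.of_nat (S n) - 1) with (a + Z.of_nat n) by lia.
      apply IH. lia. }
  replace k with (a + Z.of_nat (Z.to_nat (k - a))) by lia. apply H. lia.
Qed.

Lemma down_ind (P : Z -> Prop) a b : P b -> (forall k, a <= k < b -> P (k+1) -> P k) ->
  forall k, a <= k <= b -> P k.
Proof.
  intros H0 HS k Hk.
  assert (forall n : nat, a <= b - Z.of_nat n -> P (b - Z.of_nat n)).
  { induction n as [|n IH]; intros.
    - replace (b - Z.of_nat 0) with b by lia. auto.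
    - apply HS. lia. replace (b - Z.of_nat (S n) + 1) with (b - Z.of_nat n) by lia.
      apply IH. lia. }
  replace k with (b - Z.of_nat (Z.to_nat (b - k))) by lia. apply H. lia.
Qed.

Lemma one_side (f : Z -> Z) m : 1 <= m -> f m = 0 ->
  (forall k, 0 <= k <= m -> 0 <= f k) ->
  (forall k, 1 <= k <= m - 1 -> 2 * f k <= f (k-1) + f (k+1)) ->
  (forall k, 0 <= k <= m -> f k <= f 0) /\ (f 0 <= f 1 -> f 0 = 0).
Proof.
  intros Hm Hfm Hpos Hcv.
  assert (G : forall k, 0 <= k <= m - 1 -> f (k+1) <= f k).
  { apply down_ind.
    - replace (m-1+1) with m by ring. rewrite Hfm. apply Hpos. lia.
    - intros k Hk IH. pose proof (Hcv (k+1) ltac:(lia)) as C.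
      replace (k+1-1) with k in C by ring. replace (k+1+1) with (k+1+1) in IH by ring. lia. }
  split.
  - apply up_ind. lia. intros k Hk IH. pose proof (G (k-1) ltac:(lia)) as C.
    replace (k-1+1) with k in C by ring. lia.
  - intros H01.
    assert (G2 : forall k, 0 <= k <= m - 1 -> f k <= f (k+1)).
    { apply up_ind. exact H01. intros k Hk IH. pose proof (Hcv k ltac:(lia)).
      replace (k-1+1) with k in IH by ring. lia. }
    assert (G3 : forall k, 0 <= k <= m -> f 0 <= f k).
    { apply up_ind. lia. intros k Hk IH. pose proof (G2 (k-1) ltac:(lia)) as C.
      replace (k-1+1) with k in C by ring. lia. }
    pose proof (G3 m ltac:(lia)). pose proof (Hpos 0 ltac:(lia)). lia.
Qed.

Lemma uniq m c u : 1 <= m -> Inv m c u -> stable c -> forall j, u j = vv m j.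
Proof.
  intros Hm [Hb Hf] Hs.
  set (d := fun k => vv m k - u k).
  assert (Hd : forall k, 0 <= d k) by (intro k; unfold d; pose proof (Hb k); lia).
  assert (HL : forall k, Z.of_nat (final_config m k) - 2 <= Lap d k).
  { intro k. pose proof (Hf k). pose proof (Hs k). pose proof (final_eq m k Hm).
    unfold Lap, d in *. lia. }
  assert (Hout : forall k, k <= -m \/ m <= k -> d k = 0).
  { intros k Hk. unfold d. pose proof (vv_out m k Hm Hk). pose proof (Hb k). lia. }
  destruct (one_side d m Hm) as [A1 B1].
  { apply Hout; lia. }
  { intros; auto. }
  { intros k Hk. pose proof (HL k). rewrite final_2 in H by lia. unfold Lap in H. lia. }
  destruct (one_side (fun k => d (-k)) m Hm) as [A2 B2].
  { apply Hout; lia. }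
  { intros; auto. }
  { intros k Hk. cbv beta. pose proof (HL (-k)). rewrite final_2 in H by lia. unfold Lap in H.
    replace (-(k-1)) with (-k+1) by ring. replace (-(k+1)) with (-k-1) by ring. lia. }
  assert (H0 := HL 0). rewrite final_0 in H0 by lia. unfold Lap in H0. change (0-1) with (-1) in H0; change (0+1) with 1 in H0.
  cbv beta in A2, B2. change (- 0) with 0 in A2, B2. change (- 1) with (-1) in B2.
  pose proof (A1 1 ltac:(lia)). pose proof (A2 1 ltac:(lia)).
  assert (Hd0 : d 0 = 0).
  { destruct (Z_le_dec (d 0) (d 1)); [apply B1; auto|].
    apply B2. replace (-(1)) with (-1) in * by reflexivity. lia. }
  intro j. assert (Dj : d j = 0).
  { destruct (Z_le_dec j (-m)); [apply Hout; lia|].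
    destruct (Z_le_dec m j); [apply Hout; lia|].
    destruct (Z_le_dec 0 j).
    - pose proof (A1 j ltac:(lia)). pose proof (Hd j). lia.
    - pose proof (A2 (-j) ltac:(lia)) as X. rewrite Z.opp_involutive in X. pose proof (Hd j). lia. }
  unfold d in Dj. lia.
Qed.

Lemma exists_stable c0 c : Acc (fun y x => step x y) c -> reachable c0 c ->
  exists c', reachable c0 c' /\ stable c'.
Proof.
  intros HA. induction HA as [c _ IH]. intros Hr.
  destruct (classic (stable c)) as [Hs|Hs]. eauto.
  apply not_all_ex_not in Hs. destruct Hs as [j Hj].
  apply (IH (fire c j)).
  - exists j. split; [lia|auto].
  - eapply rt_trans; [exact Hr|]. apply rt_step. exists j. split; [lia|auto].
Qed.

Theorem lemma3p8 (m : Z) (hm : 1 <= m) :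
  let c0 := init (Z.to_nat (4 * m - 1)) in
  (* the process terminates: no infinite sequence of legal firings *)
  Acc (fun y x => step x y) c0 /\
  (* the final configuration is reached *)
  reachable c0 (final_config m) /\ stable (final_config m) /\
  (* and every terminal configuration of the process is this one *)
  (forall c, reachable c0 c -> stable c -> forall j, c j = final_config m j).
Proof.
  intros c0.
  assert (Hun : forall c, reachable c0 c -> stable c -> forall j, c j = final_config m j).
  { intros c Hr Hs j. destruct (reach_inv m c hm Hr) as [u HI].
    pose proof (uniq m c u hm HI Hs) as E. destruct HI as [_ Hf].
    apply Nat2Z.inj. rewrite Hf, final_eq by lia. unfold Lap. rewrite !E. reflexivity. }
  assert (HA : Acc (fun y x => step x y) c0).
  { assert (HI : Inv m c0 (fun _ => 0)).
    { split. intro j. pose proof (vv_nonneg m j). lia.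
      intro j. unfold c0. rewrite init_z by lia. unfold Lap. lia. }
    apply (acc_lemma m hm (S (Z.to_nat (Phi m (fun _ => 0)))) c0 _ HI). lia. }
  split; [exact HA|].
  destruct (exists_stable c0 c0 HA (rt_refl _ _ _)) as [c' [Hr Hs]].
  assert (c' = final_config m) as E by (apply functional_extensionality; apply Hun; auto).
  split; [rewrite <- E; exact Hr|]. split; [rewrite <- E; exact Hs|]. exact Hun.
Qed.
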